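(* Let $d\geq1$, $C=\mathbb R_{\geq0}^d$, and order $\mathbb R^d$ componentwise ($x\leq y$ iff $y-x\in C$). For $i=1,\ldots,d$ let $\alpha_i\geq0$, $c_i\geq0$, $\beta^i\in\mathbb R^d$, and $\mu_i$ a Borel measure on $C\setminus\{0\}$ such that $\mu_i(\{\xi\in C:|\xi|>1\})<\infty$, $\int_{\xi\in C,\,0<|\xi|\leq1}\big(\sum_{k\neq i}|\xi_k|+|\xi_i|^2\big)\mu_i(d\xi)<\infty$, and $\beta^i_k-\int_{0<|\xi|\leq1}\xi_k\,\mu_i(d\xi)\geq0$ for all $k\neq i$. Define $f=(f_1,\ldots,f_d)$ with values in $(-\infty,+\infty]$ by $$f_i(x)=\frac{\alpha_i}{2}x_i^2+x\cdot\beta^i-c_i+\int_{C\setminus\{0\}}\left(e^{x\cdot\xi}-1-x\cdot\xi\,\mathbf 1_{|\xi|\leq1}\right)\mu_i(d\xi),\qquad x\in\mathbb R^d,$$ and let $U=\{x\in\mathbb R^d: f_i(x)<\infty\text{ for all }i\}$. Then $U$ is convex and order-regular, and $f$ is convex and quasi-monotone increasing on $U$.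
   Context: A map $g\colon D\to\mathbb R^d$ is convex if $D$ is convex and $g(\lambda x+(1-\lambda)y)\leq\lambda g(x)+(1-\lambda)g(y)$ componentwise for $x,y\in D$, $\lambda\in[0,1]$. For the order induced by $\mathbb R^d_{\geq0}$, $g$ is quasi-monotone increasing on $D$ if for all $x,y\in D$ with $x\leq y$ and $x_i=y_i$ one has $g_i(x)\leq g_i(y)$ (equivalently: $x\leq y$, $l(x)=l(y)$ imply $l(g(x))\leq l(g(y))$ for every linear functional $l$ nonnegative on $\mathbb R^d_{\geq0}$). A set $D$ is order-regular if $x\in D$, $y\leq x$ imply $y\in D$. Here $|\cdot|$ is the Euclidean norm and $x\cdot\xi$ the standard inner product. *)

(* Defs.v *)
From HB Require Import structures.
From mathcomp Require Import all_boot all_order all_algebra.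
From mathcomp Require Import all_classical all_reals all_analysis.
Set Implicit Arguments. Unset Strict Implicit. Unset Printing Implicit Defensive.
Import Order.TTheory GRing.Theory Num.Theory.
Import numFieldNormedType.Exports.
Local Open Scope classical_set_scope.
Local Open Scope ring_scope.

(* R^d is modelled by row vectors 'rV[R]_d; coordinate k of x is x 0 k. *)

Definition BorelRd (R : realType) (d : nat) :=
  g_sigma_algebraType (@open 'rV[R]_d).

Definition dotv (R : realType) (d : nat) (x y : 'rV[R]_d) : R :=
  \sum_(k < d) x 0 k * y 0 k.
Definition enorm (R : realType) (d : nat) (x : 'rV[R]_d) : R :=
  Num.sqrt (\sum_(k < d) (x 0 k) ^+ 2).

Definition vle (R : realType) (d : nat) (x y : 'rV[R]_d) : Prop :=
  forall k : 'I_d, x 0 k <= y 0 k.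

Definition cone (R : realType) (d : nat) : set 'rV[R]_d :=
  [set xi | forall k : 'I_d, 0 <= xi 0 k].

Definition coneStar (R : realType) (d : nat) : set 'rV[R]_d :=
  [set xi | cone xi /\ xi <> 0].

(* {xi in C : 0 < |xi| <= 1}  (note: inside C\{0}, 0<|xi| is automatic) *)
Definition smallJumps (R : realType) (d : nat) : set 'rV[R]_d :=
  [set xi | coneStar xi /\ enorm xi <= 1].

Definition bigJumps (R : realType) (d : nat) : set 'rV[R]_d :=
  [set xi | cone xi /\ 1 < enorm xi].

Definition fcomp (R : realType) (d : nat) (alpha c : R) (beta : 'rV[R]_d)
  (mu : {measure set (BorelRd R d) -> \bar R}) (i : 'I_d) (x : 'rV[R]_d) : \bar R :=
  ((alpha / 2) * (x 0 i) ^+ 2 + dotv x beta - c)%:E +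
  (\int[mu]_(xi in (@coneStar R d : set (BorelRd R d)))
     ((expR (dotv x xi) - 1 - dotv x xi * (if enorm xi <= 1 then 1 else 0))%R)%:E)%E.

Definition effdom (R : realType) (d : nat) (F : 'I_d -> 'rV[R]_d -> \bar R)
  : set 'rV[R]_d := [set x | forall i, (F i x < +oo)%E].

Definition convex_set_Rd (R : realType) (d : nat) (D : set 'rV[R]_d) : Prop :=
  forall x y (l : R), D x -> D y -> 0 <= l <= 1 -> D (l *: x + (1 - l) *: y).

Definition order_regular (R : realType) (d : nat) (D : set 'rV[R]_d) : Prop :=
  forall x y, D x -> vle y x -> D y.

Definition convex_map_on (R : realType) (d : nat) (F : 'I_d -> 'rV[R]_d -> \bar R)
  (D : set 'rV[R]_d) : Prop :=
  convex_set_Rd D /\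
  forall x y (l : R), D x -> D y -> 0 <= l <= 1 -> forall i,
    (F i (l *: x + (1 - l) *: y)%R <= (l%:E * F i x + (1 - l)%:E * F i y)%E)%E.

Definition quasi_monotone_on (R : realType) (d : nat)
  (F : 'I_d -> 'rV[R]_d -> \bar R) (D : set 'rV[R]_d) : Prop :=
  forall x y, D x -> D y -> vle x y -> forall i, x 0 i = y 0 i -> (F i x <= F i y)%E.

(* Main.v *)
Require Import Defs.
From HB Require Import structures.
From mathcomp Require Import all_boot all_order all_algebra.
From mathcomp Require Import all_classical all_reals all_analysis.
From mathcomp Require Import measurable_realfun.
From mathcomp Require Import ring lra.
Import Order.TTheory GRing.Theory Num.Theory.
Import numFieldNormedType.Exports.
Local Open Scope classical_set_scope.
Local Open Scope ring_scope.
Set Implicit Arguments. Unset Strict Implicit.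

Section Meas.
Variables (R : realType) (d : nat).
Local Notation T := (BorelRd R d).

Lemma mproj (k : 'I_d) : measurable_fun [set: T] (fun x : T => x 0 k).
Proof.
apply: (measurability _ (measurable_realfun.RGenOpens.measurableE R)).
move=> _ [_ [a [b ->] <-]]; apply: sub_sigma_algebra; rewrite setTI.
have := @coord_continuous R 1 d 0 k.
move=> /continuousP; apply; exact: interval_open.
Qed.

Definition sumsq (x : 'rV[R]_d) : R := \sum_(k < d) (x 0 k) ^+ 2.

Lemma msumsq : measurable_fun [set: T] (@sumsq).
Proof.
rewrite /sumsq; apply: (@measurable_sum _ T R setT _ _ (fun k (x : T) => x 0 k ^+ 2)).
move=> k; apply: measurable_funX; exact: mproj.
Qed.

Lemma mdot (y : 'rV[R]_d) : measurable_fun [set: T] (fun x : T => dotv y x).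
Proof.
rewrite /dotv; apply: (@measurable_sum _ T R setT _ _ (fun k (x : T) => y 0 k * x 0 k)).
move=> k; apply: measurable_funM; [exact: measurable_cst | exact: mproj].
Qed.

Lemma mdotr (y : 'rV[R]_d) : measurable_fun [set: T] (fun x : T => dotv x y).
Proof.
rewrite /dotv; apply: (@measurable_sum _ T R setT _ _ (fun k (x : T) => x 0 k * y 0 k)).
move=> k; apply: measurable_funM; [exact: mproj | exact: measurable_cst].
Qed.


Lemma sumsq_ge0 (x : 'rV[R]_d) : 0 <= sumsq x.
Proof. by apply: sumr_ge0 => k _; exact: sqr_ge0. Qed.

Lemma sumsq_eq0 (x : 'rV[R]_d) : sumsq x = 0 -> x = 0.
Proof.
move=> H; apply/matrixP => a k; rewrite (ord1 a) mxE.
have := psumr_eq0P (fun k (_ : true) => sqr_ge0 (x 0 k)) H (i:=k) erefl.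
by move/eqP; rewrite sqrf_eq0 => /eqP.
Qed.

Lemma sumsq0 : sumsq (0 : 'rV[R]_d) = 0.
Proof. by rewrite /sumsq big1 // => k _; rewrite mxE expr0n. Qed.

Lemma enorm_le1 (x : 'rV[R]_d) : (enorm x <= 1) = (sumsq x <= 1).
Proof. by rewrite /enorm -/(sumsq x) -[in RHS](ler_sqrt _ ler01) sqrtr1. Qed.

Lemma mpre (f : T -> R) (Y : set R) : measurable_fun [set: T] f -> measurable Y ->
  measurable (f @^-1` Y : set T).
Proof. by move=> mf mY; rewrite -[X in measurable X]setTI; exact: mf. Qed.

Definition negp (x : 'rV[R]_d) : R := \sum_(k < d) (`|x 0 k| - x 0 k).

Lemma mnegp : measurable_fun [set: T] (@negp).
Proof.
rewrite /negp; apply: (@measurable_sum _ T R setT _ _ (fun k (x : T) => `|x 0 k| - x 0 k)).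
move=> k; apply: measurable_funB; last exact: mproj.
by apply: measurableT_comp; [exact: normr_measurable | exact: mproj].
Qed.

Lemma cone_eq : (@cone R d : set T) = (@negp) @^-1` `]-oo, 0].
Proof.
apply/seteqP; split => x /=; rewrite /cone /preimage /= in_itv /=.
  by move=> Hx; rewrite /negp big1 // => k _; rewrite ger0_norm ?subrr.
move=> H k.
have h0 : forall k : 'I_d, true -> 0 <= `|x 0 k| - x 0 k.
  by move=> j _; rewrite subr_ge0 ler_norm.
have e0 : negp x = 0 by apply/le_anti; rewrite H /=; exact: sumr_ge0.
have := psumr_eq0P h0 e0 (i:=k) erefl.
by move/eqP; rewrite subr_eq0 -ger0_def.
Qed.

Lemma mcone : measurable (@cone R d : set T).
Proof. rewrite cone_eq; apply: mpre; [exact: mnegp | exact: measurable_itv]. Qed.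

Definition Eball : set T := [set x | enorm x <= 1].

Lemma mEball : measurable Eball.
Proof.
have -> : Eball = (@sumsq) @^-1` `]-oo, 1].
  by apply/seteqP; split => x /=; rewrite /Eball /preimage /= in_itv /= enorm_le1.
apply: mpre; [exact: msumsq | exact: measurable_itv].
Qed.

Lemma coneStar_eq : (@coneStar R d : set T) = (@cone R d : set T) `&` ~` ((@sumsq) @^-1` [set 0]).
Proof.
apply/seteqP; split => x /=; rewrite /coneStar /preimage /=.
  by move=> [Cx nx]; split => // /sumsq_eq0.
by move=> [Cx nx]; split => // x0; apply: nx; rewrite x0 sumsq0.
Qed.

Lemma mconeStar : measurable (@coneStar R d : set T).
Proof.
rewrite coneStar_eq; apply: measurableI; first exact: mcone.
apply: measurableC; apply: mpre; [exact: msumsq | exact: measurable_set1].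
Qed.

Lemma bigJumps_eq : (@bigJumps R d : set T) = (@coneStar R d : set T) `&` ~` Eball.
Proof.
apply/seteqP; split => x /=; rewrite /bigJumps /coneStar /Eball /=.
  move=> [Cx lt1]; split; last by apply/negP; rewrite -ltNge.
  split => // x0; move: lt1; rewrite x0 /enorm -/(sumsq 0) sumsq0 sqrtr0.
  by rewrite ltr10.
by move=> [[Cx _] /negP]; rewrite -ltNge.
Qed.

Definition ind (x : 'rV[R]_d) : R := if enorm x <= 1 then 1 else 0.

Lemma ind_indic : (@ind) = \1_Eball.
Proof.
apply/funext => x; rewrite indicE /ind /Eball.
case: ifPn => h.
  by rewrite mem_set.
by rewrite memNset // => /= /(negP h).
Qed.

Lemma mind : measurable_fun [set: T] (@ind).
Proof. rewrite ind_indic; apply: measurable_indic; exact: mEball. Qed.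

End Meas.

Lemma max_aux1 (R : realType) (r h : R) : 0 <= r ->
  Num.max (- (r + h)) 0 <= Num.max (- h) 0.
Proof.
move=> r0; rewrite ge_max !le_max lexx orbT andbT.
by apply/orP; left; lra.
Qed.

Lemma max_aux2 (R : realType) (r h : R) :
  r <= Num.max (r + h) 0 + Num.max (- h) 0.
Proof.
have h1 : r + h <= Num.max (r + h) 0 by rewrite le_max lexx.
have h2 : - h <= Num.max (- h) 0 by rewrite le_max lexx.
lra.
Qed.

Section GenInt.
Context d' (X : measurableType d') (R : realType) (nu : {measure set X -> \bar R}).
Local Open Scope ereal_scope.

Lemma ge0_integrableD (D : set X) (f : X -> \bar R) (h : X -> R) :
  measurable D -> measurable_fun D f -> (forall x, D x -> 0 <= f x) ->
  nu.-integrable D (EFin \o h) ->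
  \int[nu]_(x in D) (f x + (h x)%:E) =
    \int[nu]_(x in D) f x + \int[nu]_(x in D) (h x)%:E.
Proof.
move=> mconeStar mf f0 ih.
have mh : measurable_fun D (EFin \o h) := measurable_int _ ih.
have hfin : \int[nu]_(x in D) (h x)%:E \is a fin_num := integrable_fin_num mconeStar ih.
have [fint|] := ltP (\int[nu]_(x in D) f x) +oo.
  have fi : nu.-integrable D f.
    apply/integrableP; split => //.
    by rewrite (eq_integral f) // => x; rewrite inE => Dx; rewrite gee0_abs // f0.
  exact: (integralD mconeStar fi ih).
rewrite leye_eq => /eqP finf; rewrite finf addye; last by move: hfin; rewrite fin_numE => /andP[].
set g := fun x => f x + (h x)%:E.
have mg : measurable_fun D g := emeasurable_funD mf mh.
have nfin : \int[nu]_(x in D) (EFin \o h)^\- x \is a fin_num :=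
  integrable_neg_fin_num mconeStar ih.
have negle : \int[nu]_(x in D) g^\- x <= \int[nu]_(x in D) (EFin \o h)^\- x.
  apply: ge0_le_integral => //; try exact: measurable_funeneg.
  move=> x Dx; rewrite !funenegE /g /=.
  move: (f0 x Dx); set fx := f x; case: fx => [r r0| _ |//].
    by rewrite -EFinD -!EFinN -!EFin_max lee_fin max_aux1.
  by rewrite addye //= ge_max leNye /= le_max lexx orbT.
have gnfin : \int[nu]_(x in D) g^\- x \is a fin_num.
  rewrite ge0_fin_numE; last by apply: integral_ge0 => x _; exact: funeneg_ge0.
  by apply: le_lt_trans negle _; rewrite -ge0_fin_numE ?nfin //; apply: integral_ge0 => x _; exact: funeneg_ge0.
have fle : \int[nu]_(x in D) f x <=
    \int[nu]_(x in D) (g^\+ x + (EFin \o h)^\- x).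
  apply: ge0_le_integral => //.
  - by apply: emeasurable_funD; [exact: measurable_funepos | exact: measurable_funeneg].
  move=> x Dx; rewrite funeposE funenegE /g /=.
  move: (f0 x Dx); set fx := f x; case: fx => [r r0| _ |//].
    by rewrite -EFinD -!EFin_max -EFinD lee_fin max_aux2.
  by rewrite addye // -EFin_max.
rewrite ge0_integralD // in fle; try exact: measurable_funepos; try exact: measurable_funeneg.
rewrite finf in fle.
rewrite integralE.
move: fle; rewrite -(fineK nfin) -(fineK gnfin).
by case: (\int[nu]_(x in D) g^\+ x) => [r| |].
Qed.

End GenInt.

Lemma exp_quad (R : realType) (t : R) : expR t - t - 1 <= t ^+ 2 * expR `|t|.
Proof.
have E0 : 0 < expR t := expR_gt0 t.
have EF : expR t * expR (- t) = 1 by rewrite -expRD subrr expR0.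
have h1 : 1 + t <= expR t := expR_ge1Dx t.
have h2 : 1 - t <= expR (- t) := expR_ge1Dx (- t).
have h3 : expR t - 1 <= t * expR t.
  have : expR t * (1 - t) <= expR t * expR (- t) by rewrite ler_pM2l.
  rewrite EF; nra.
have [t0|t0] := leP 0 t.
  rewrite ger0_norm //.
  have : t * (expR t - 1) <= t * (t * expR t) by rewrite ler_wpM2l.
  nra.
rewrite ltr0_norm //.
have F1 : 1 <= expR (- t) by lra.
have : t ^+ 2 <= t ^+ 2 * expR (- t).
  by rewrite -{1}(mulr1 (t ^+ 2)) ler_wpM2l // sqr_ge0.
nra.
Qed.

Section Pointwise.
Variables (R : realType) (d : nat).

Definition Aint (x xi : 'rV[R]_d) : R :=
  expR (dotv x xi) - dotv x xi * ind xi - ind xi.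

Definition psi (xi : 'rV[R]_d) : R := ind xi - 1.

Lemma ind01 (xi : 'rV[R]_d) : ind xi = 0 \/ ind xi = 1.
Proof. by rewrite /ind; case: ifP; [right|left]. Qed.

Lemma Aint_ge0 x xi : 0 <= Aint x xi.
Proof.
rewrite /Aint; have := expR_ge1Dx (dotv x xi); have := expR_gt0 (dotv x xi).
case: (ind01 xi) => ->; rewrite ?mulr0 ?mulr1; lra.
Qed.

Lemma Gint_eq x xi : expR (dotv x xi) - 1 - dotv x xi * (if enorm xi <= 1 then 1 else 0)
  = Aint x xi + psi xi.
Proof. rewrite /Aint /psi /ind; ring. Qed.

Lemma dot_conv (x y xi : 'rV[R]_d) (l : R) :
  dotv (l *: x + (1 - l) *: y) xi = l * dotv x xi + (1 - l) * dotv y xi.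
Proof.
rewrite /dotv !mulr_sumr -big_split; apply: eq_bigr => k _ /=; rewrite !mxE; ring.
Qed.

Lemma exp_convex (a b l : R) : 0 <= l <= 1 ->
  expR (l * a + (1 - l) * b) <= l * expR a + (1 - l) * expR b.
Proof.
move=> /andP[l0 l1]; set m := l * a + (1 - l) * b.
have Em : 0 < expR m := expR_gt0 m.
have ha : expR m * (1 + (a - m)) <= expR a.
  have -> : expR a = expR m * expR (a - m) by rewrite -expRD; congr expR; ring.
  by rewrite ler_pM2l // expR_ge1Dx.
have hb : expR m * (1 + (b - m)) <= expR b.
  have -> : expR b = expR m * expR (b - m) by rewrite -expRD; congr expR; ring.
  by rewrite ler_pM2l // expR_ge1Dx.
have ea : l * (expR m * (1 + (a - m))) <= l * expR a by rewrite ler_wpM2l.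
have eb : (1 - l) * (expR m * (1 + (b - m))) <= (1 - l) * expR b.
  by rewrite ler_wpM2l // subr_ge0.
have : l * (expR m * (1 + (a - m))) + (1 - l) * (expR m * (1 + (b - m))) = expR m.
  rewrite /m; ring.
lra.
Qed.

Lemma Aint_convex (x y xi : 'rV[R]_d) (l : R) : 0 <= l <= 1 ->
  Aint (l *: x + (1 - l) *: y) xi <= l * Aint x xi + (1 - l) * Aint y xi.
Proof.
move=> hl; rewrite /Aint dot_conv.
have := exp_convex (dotv x xi) (dotv y xi) hl.
set ex := expR (dotv x xi); set ey := expR (dotv y xi).
set e := expR _ => he.
have -> : l * (ex - dotv x xi * ind xi - ind xi) + (1 - l) * (ey - dotv y xi * ind xi - ind xi)
  = (l * ex + (1 - l) * ey) - (l * dotv x xi + (1 - l) * dotv y xi) * ind xi - ind xi by ring.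
lra.
Qed.

Lemma dot_mono (x y xi : 'rV[R]_d) : vle x y -> cone xi -> dotv x xi <= dotv y xi.
Proof.
move=> hxy hxi; rewrite /dotv; apply: ler_sum => k _.
by rewrite ler_wpM2r.
Qed.

Lemma Aint_quasi (x y xi : 'rV[R]_d) : vle x y -> cone xi ->
  Aint x xi <= Aint y xi + \sum_(k < d) (y 0 k - x 0 k) * (xi 0 k * ind xi).
Proof.
move=> hxy hxi.
have -> : \sum_(k < d) (y 0 k - x 0 k) * (xi 0 k * ind xi) = (dotv y xi - dotv x xi) * ind xi.
  rewrite /dotv -sumrB mulr_suml; apply: eq_bigr => k _; ring.
have : expR (dotv x xi) <= expR (dotv y xi) by rewrite ler_expR; exact: dot_mono.
rewrite /Aint; lra.
Qed.

End Pointwise.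

Section Small.
Variables (R : realType) (d : nat) (i : 'I_d).

Definition Hs (xi : 'rV[R]_d) : R :=
  (\sum_(k < d | k != i) `|xi 0 k|) + `|xi 0 i| ^+ 2.
Definition Ynorm (y : 'rV[R]_d) : R := \sum_(k < d) `|y 0 k|.

Lemma Ynorm_ge0 y : 0 <= Ynorm y.
Proof. by apply: sumr_ge0 => k _. Qed.

Lemma coord_le1 (xi : 'rV[R]_d) k : enorm xi <= 1 -> `|xi 0 k| <= 1.
Proof.
rewrite enorm_le1 => h.
have : xi 0 k ^+ 2 <= sumsq xi.
  rewrite /sumsq (bigD1 k) //= lerDl; apply: sumr_ge0 => j _; exact: sqr_ge0.
rewrite -real_normK ?num_real // => h2.
have := normr_ge0 (xi 0 k); nra.
Qed.

Lemma absy_le (y : 'rV[R]_d) k : `|y 0 k| <= Ynorm y.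
Proof. by rewrite /Ynorm (bigD1 k) //= lerDl; apply: sumr_ge0. Qed.

Lemma dot_abs_le (y xi : 'rV[R]_d) : enorm xi <= 1 -> `|dotv y xi| <= Ynorm y.
Proof.
move=> h; apply: le_trans (ler_norm_sum _ _ _) _; apply: ler_sum => k _.
by rewrite normrM ler_piMr // coord_le1.
Qed.

Lemma dot_sq_le (y xi : 'rV[R]_d) : enorm xi <= 1 ->
  dotv y xi ^+ 2 <= 2 * Ynorm y ^+ 2 * Hs xi.
Proof.
move=> h; rewrite /dotv (bigD1 i) //=.
set r := \sum_(k < d | k != i) y 0 k * xi 0 k.
set Y := Ynorm y.
set S1 := \sum_(k < d | k != i) `|xi 0 k|.
have Y0 : 0 <= Y := Ynorm_ge0 y.
have S10 : 0 <= S1 by apply: sumr_ge0.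
have rle1 : `|r| <= \sum_(k < d | k != i) `|y 0 k| * `|xi 0 k|.
  by apply: le_trans (ler_norm_sum _ _ _) _; apply: ler_sum => k _; rewrite normrM.
have rle2 : \sum_(k < d | k != i) `|y 0 k| * `|xi 0 k| <= Y * S1.
  rewrite /S1 mulr_sumr; apply: ler_sum => k _.
  by rewrite ler_wpM2r // absy_le.
have rle3 : \sum_(k < d | k != i) `|y 0 k| * `|xi 0 k| <= Y.
  apply: (@le_trans _ _ (\sum_(k < d | k != i) `|y 0 k|)).
    by apply: ler_sum => k _; rewrite ler_piMr // coord_le1.
  by rewrite /Y /Ynorm [X in _ <= X](bigD1 i) //= lerDr.
have yi : `|y 0 i| <= Y := absy_le y i.
have rsq : r ^+ 2 = `|r| ^+ 2 by rewrite real_normK ?num_real.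
have asq : (y 0 i * xi 0 i) ^+ 2 = `|y 0 i| ^+ 2 * `|xi 0 i| ^+ 2.
  by rewrite exprMn !real_normK ?num_real.
have r0 : 0 <= `|r| := normr_ge0 r.
have ra1 : `|r| <= Y * S1 := le_trans rle1 rle2.
have ra2 : `|r| <= Y := le_trans rle1 rle3.
have h1 : `|r| ^+ 2 <= Y * (Y * S1).
  rewrite expr2; apply: (le_trans (ler_wpM2l r0 ra1)).
  by rewrite ler_wpM2r // mulr_ge0.
have h2 : `|y 0 i| ^+ 2 * `|xi 0 i| ^+ 2 <= Y ^+ 2 * `|xi 0 i| ^+ 2.
  apply: ler_wpM2r; first exact: sqr_ge0.
  by rewrite expr2 (expr2 Y); apply: ler_pM.
have h3 : (y 0 i * xi 0 i + r) ^+ 2 <= 2 * (y 0 i * xi 0 i) ^+ 2 + 2 * r ^+ 2.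
  have := sqr_ge0 (y 0 i * xi 0 i - r); nra.
rewrite /Hs -/S1.
rewrite rsq asq in h3; lra.
Qed.

Lemma Aint_small (y xi : 'rV[R]_d) : enorm xi <= 1 ->
  Aint y xi <= 2 * Ynorm y ^+ 2 * expR (Ynorm y) * Hs xi.
Proof.
move=> h; rewrite /Aint /ind h mulr1.
set t := dotv y xi; set Y := Ynorm y.
have q := exp_quad t.
have e : expR `|t| <= expR Y by rewrite ler_expR dot_abs_le.
have sq := dot_sq_le y h; rewrite -/t -/Y in sq.
have t2 : 0 <= t ^+ 2 := sqr_ge0 t.
have eY : 0 <= expR Y := expR_ge0 Y.
have : t ^+ 2 * expR `|t| <= t ^+ 2 * expR Y by rewrite ler_wpM2l.
have : t ^+ 2 * expR Y <= 2 * Y ^+ 2 * Hs xi * expR Y by rewrite ler_wpM2r.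
lra.
Qed.

Lemma Aint_oreg (x y xi : 'rV[R]_d) : vle y x -> cone xi ->
  Aint y xi <= Aint x xi + (2 * Ynorm y ^+ 2 * expR (Ynorm y)) * (Hs xi * ind xi).
Proof.
move=> hyx hxi.
have [h|h] := boolP (enorm xi <= 1).
  have := Aint_small y h; have := Aint_ge0 x xi.
  rewrite /ind h mulr1; lra.
rewrite /Aint /ind (negbTE h) !mulr0 !subr0 addr0.
by rewrite ler_expR; exact: dot_mono.
Qed.

End Small.

Section Main.
Variables (R : realType) (d : nat).
Local Notation T := (BorelRd R d).
Variable (mu : {measure set T -> \bar R}).
Local Notation D := (@coneStar R d : set T).

Lemma mAint x : measurable_fun [set: T] (Aint x).
Proof.
rewrite /Aint; apply: measurable_funB; last exact: mind.
apply: measurable_funB; first exact: (measurableT_comp (@measurable_expR R) (mdot x)).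
apply: measurable_funM; [exact: mdot | exact: mind].
Qed.


Lemma mAintE x : measurable_fun D (fun xi => (Aint x xi)%:E).
Proof.
apply/measurable_EFinP; apply: (measurable_funS measurableT) => //; exact: mAint.
Qed.

Definition J x := (\int[mu]_(xi in D) (Aint x xi)%:E)%E.

Lemma J_ge0 x : (0 <= J x)%E.
Proof. by apply: integral_ge0 => xi _; rewrite lee_fin Aint_ge0. Qed.

Lemma mZA (k : R) z : measurable_fun D (fun xi => k%:E * (Aint z xi)%:E)%E.
Proof.
rewrite (_ : (fun xi => _) = EFin \o (fun xi => k * Aint z xi)); last first.
  by apply/funext => xi; rewrite /= EFinM.
apply/measurable_EFinP; apply: (measurable_funS measurableT) => //.
apply: measurable_funM; [exact: measurable_cst | exact: mAint].
Qed.

Lemma ZA (k : R) z : 0 <= k ->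
  (\int[mu]_(xi in D) (k%:E * (Aint z xi)%:E) = k%:E * J z)%E.
Proof.
move=> k0; apply: ge0_integralZl_EFin => //; [exact: mconeStar | | exact: mAintE].
by move=> xi _; rewrite lee_fin Aint_ge0.
Qed.

Lemma J_convex x y (l : R) : 0 <= l <= 1 ->
  (J (l *: x + (1 - l) *: y) <= l%:E * J x + (1 - l)%:E * J y)%E.
Proof.
move=> hl; have /andP[l0 l1] := hl.
have l0' : 0 <= 1 - l by rewrite subr_ge0.
rewrite -(ZA x l0) -(ZA y l0') -ge0_integralD //; first last.
- exact: mZA.
- by move=> xi _; rewrite -EFinM lee_fin mulr_ge0 // Aint_ge0.
- exact: mZA.
- by move=> xi _; rewrite -EFinM lee_fin mulr_ge0 // Aint_ge0.
- exact: mconeStar.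
apply: ge0_le_integral => //.
- exact: mconeStar.
- by move=> xi _; rewrite lee_fin Aint_ge0.
- exact: mAintE.
- by apply: emeasurable_funD; exact: mZA.
by move=> xi _; rewrite -!EFinM -EFinD lee_fin Aint_convex.
Qed.


Lemma small_ind (F : 'rV[R]_d -> R) :
  (\int[mu]_(xi in (@smallJumps R d : set T)) (F xi)%:E =
   \int[mu]_(xi in D) (F xi * ind xi)%:E)%E.
Proof.
rewrite (_ : (@smallJumps R d : set T) = D `&` @Eball R d); last by [].
rewrite integral_mkcondr; apply: eq_integral => xi _.
rewrite /patch /ind; case: ifPn => h.
  by move/set_mem: h => /= ->; rewrite mulr1.
have h' : ~~ (enorm xi <= 1) by apply/negP => h'; apply: (negP h); rewrite mem_set.
by rewrite (negbTE h') mulr0.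
Qed.


Lemma mHs (i : 'I_d) : measurable_fun [set: T] (Hs i).
Proof.
rewrite /Hs; apply: measurable_funD; last first.
  by apply: measurable_funX; apply: measurableT_comp; [exact: normr_measurable | exact: mproj].
rewrite (_ : (fun x => _) = (fun x : T => \sum_(k < d) (if k != i then `|x 0 k| else 0))); last first.
  by apply/funext => x; rewrite big_mkcond.
apply: (@measurable_sum _ T R setT _ _ (fun k (x : T) => if k != i then `|x 0 k| else 0)).
move=> k; case: (k != i); last exact: measurable_cst.
by apply: measurableT_comp; [exact: normr_measurable | exact: mproj].
Qed.

Lemma mFind (F : 'rV[R]_d -> R) : measurable_fun [set: T] F ->
  measurable_fun D (fun xi => (F xi * ind xi)%:E).
Proof.
move=> mF; apply/measurable_EFinP; apply: (measurable_funS measurableT) => //.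
by apply: measurable_funM => //; exact: mind.
Qed.

Lemma J_oreg (i : 'I_d) x y : vle y x ->
  (J y <= J x + (2 * Ynorm y ^+ 2 * expR (Ynorm y))%:E *
     \int[mu]_(xi in (@smallJumps R d : set T)) (Hs i xi)%:E)%E.
Proof.
move=> hyx; set K := 2 * Ynorm y ^+ 2 * expR (Ynorm y).
have K0 : 0 <= K.
  by rewrite /K; apply: mulr_ge0; [apply: mulr_ge0 => //; exact: sqr_ge0 | exact: expR_ge0].
have HI0 : forall xi, D xi -> (0 <= (Hs i xi * ind xi)%:E)%E.
  move=> xi _; rewrite lee_fin; apply: mulr_ge0.
    by apply: addr_ge0; [exact: sumr_ge0 | exact: sqr_ge0].
  by case: (ind01 xi) => ->.
rewrite small_ind -ge0_integralZl_EFin //; try exact: mconeStar; try exact: HI0; try exact: (mFind (mHs i)).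
have mKH : measurable_fun D (fun xi => (K%:E * (Hs i xi * ind xi)%:E)%E).
  rewrite (_ : (fun xi => _) = (fun xi => ((K * Hs i xi) * ind xi)%:E)); last first.
    by apply/funext => xi; rewrite /= -EFinM mulrA.
  apply: mFind; apply: measurable_funM; [exact: measurable_cst | exact: mHs].
rewrite /J -ge0_integralD //; try exact: mconeStar; try exact: mAintE; try exact: mKH;
  try (by move=> xi _; rewrite lee_fin Aint_ge0); try (by move=> xi Dxi; rewrite mule_ge0 // HI0).
apply: ge0_le_integral => //.
- exact: mconeStar.
- by move=> xi _; rewrite lee_fin Aint_ge0.
- exact: mAintE.
- by apply: emeasurable_funD; [exact: mAintE | exact: mKH].
move=> xi Dxi; rewrite -EFinM -EFinD lee_fin.
by apply: Aint_oreg => //; case: Dxi.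
Qed.


Lemma J_quasi x y : vle x y ->
  (J x <= J y + \sum_(k < d) ((y 0 k - x 0 k)%:E *
     \int[mu]_(xi in (@smallJumps R d : set T)) (xi 0 k)%:E))%E.
Proof.
move=> hxy.
have h0 k : 0 <= y 0 k - x 0 k by rewrite subr_ge0.
have i0 (xi : 'rV[R]_d) : 0 <= ind xi by case: (ind01 xi) => ->.
have G0 k : forall xi, D xi -> (0 <= ((y 0 k - x 0 k) * (xi 0 k * ind xi))%:E)%E.
  move=> xi [Cxi _]; rewrite lee_fin; apply: mulr_ge0; [exact: h0 | apply: mulr_ge0; [exact: Cxi | exact: i0]].
have G0' k : forall xi, D xi -> (0 <= (xi 0 k * ind xi)%:E)%E.
  move=> xi [Cxi _]; rewrite lee_fin; apply: mulr_ge0; [exact: Cxi | exact: i0].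
have mG k : measurable_fun D (fun xi => ((y 0 k - x 0 k) * (xi 0 k * ind xi))%:E).
  rewrite (_ : (fun xi => _) = (fun xi : T => (((y 0 k - x 0 k) * xi 0 k) * ind xi)%:E)); last first.
    by apply/funext => xi; rewrite mulrA.
  apply: mFind; apply: measurable_funM; [exact: measurable_cst | exact: mproj].
have eS : (\sum_(k < d) ((y 0 k - x 0 k)%:E *
     \int[mu]_(xi in (@smallJumps R d : set T)) (xi 0 k)%:E) =
   \int[mu]_(xi in D) (\sum_(k < d) ((y 0 k - x 0 k) * (xi 0 k * ind xi))%:E))%E.
  rewrite ge0_integral_sum //; last exact: mconeStar.
  apply: eq_bigr => k _; rewrite small_ind -ge0_integralZl_EFin //; try exact: mconeStar; try exact: G0';
    try exact: (mFind (mproj k)).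
have mS : measurable_fun D (fun xi => \sum_(k < d) ((y 0 k - x 0 k) * (xi 0 k * ind xi))%:E)%E.
  exact: emeasurable_sum.
have S0 : forall xi, D xi -> (0 <= \sum_(k < d) ((y 0 k - x 0 k) * (xi 0 k * ind xi))%:E)%E.
  by move=> xi Dxi; apply: sume_ge0 => k _; exact: G0.
rewrite eS /J -ge0_integralD //; try exact: mconeStar; try exact: mAintE; try exact: mS; try exact: S0;
  try (by move=> xi _; rewrite lee_fin Aint_ge0).
apply: ge0_le_integral => //.
- exact: mconeStar.
- by move=> xi _; rewrite lee_fin Aint_ge0.
- exact: mAintE.
- by apply: emeasurable_funD; [exact: mAintE | exact: mS].
move=> xi [Cxi _]; rewrite sumEFin -EFinD lee_fin.
exact: Aint_quasi.
Qed.


Lemma psi_int : (mu (@bigJumps R d : set T) < +oo)%E -> mu.-integrable D (EFin \o (@psi R d)).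
Proof.
move=> hbig; apply/integrableP; split.
  apply/measurable_EFinP; apply: (measurable_funS measurableT) => //.
  by apply: measurable_funB; [exact: mind | exact: measurable_cst].
rewrite (eq_integral (fun xi => (\1_(~` @Eball R d) xi)%:E)).
  rewrite integral_indic //; [|exact: mconeStar|exact: (measurableC (@mEball R d))].
  by rewrite setIC -bigJumps_eq.
move=> xi _; rewrite /= /psi /ind (indicE R); case: ifPn => h.
  have -> : (xi \in ~` @Eball R d) = false.
    by apply/negbTE/negP => /set_mem; apply.
  by rewrite /= subrr normr0.
have -> : (xi \in ~` @Eball R d) = true.
  by apply/mem_set => /= h'; move/negP: h; apply.
by rewrite /= sub0r normrN normr1.
Qed.

Lemma f_decomp (hbig : (mu (@bigJumps R d : set T) < +oo)%E) (alpha c : R) (beta : 'rV[R]_d)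
  (i : 'I_d) x :
  fcomp alpha c beta mu i x = (((alpha / 2) * x 0 i ^+ 2 + dotv x beta - c)%:E +
    (J x + \int[mu]_(xi in D) (psi xi)%:E))%E.
Proof.
rewrite /fcomp; congr (_ + _)%E.
rewrite (eq_integral (fun xi : T => (Aint x xi)%:E + (psi xi)%:E)%E).
  apply: (ge0_integrableD (@mconeStar R d) (mAintE x) _ (psi_int hbig)).
  by move=> xi _; rewrite lee_fin Aint_ge0.
by move=> xi _; rewrite Gint_eq EFinD.
Qed.

End Main.

Lemma lt_decomp (R : realType) (p : R) (j m : \bar R) : m \is a fin_num -> (0 <= j)%E ->
  ((p%:E + (j + m) < +oo) = (j < +oo))%E.
Proof.
move=> mf j0; rewrite -(fineK mf); case: j j0 => [j| |] // _.
  by rewrite -!EFinD !ltry.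

Qed.

Lemma le_drift (R : realType) (b : R) (I : \bar R) : (0 <= b%:E - I)%E -> (0 <= I)%E -> (I <= b%:E)%E.
Proof. by case: I => [r| |] //; rewrite -EFinB !lee_fin subr_ge0. Qed.

Lemma conv_sq (R : realType) (l a b : R) : 0 <= l <= 1 ->
  (l * a + (1 - l) * b) ^+ 2 <= l * a ^+ 2 + (1 - l) * b ^+ 2.
Proof.
move=> /andP[l0 l1].
have : 0 <= l * (1 - l) * (a - b) ^+ 2.
  by apply: mulr_ge0; [apply: mulr_ge0; lra | exact: sqr_ge0].
rewrite !expr2; lra.
Qed.

Unset Implicit Arguments. Set Strict Implicit.

Theorem mainTheorem6 (R : realType) (d : nat) (hd : (1 <= d)%N)
  (alpha c : 'I_d -> R) (beta : 'I_d -> 'rV[R]_d)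
  (mu : 'I_d -> {measure set (BorelRd R d) -> \bar R})
  (halpha : forall i, 0 <= alpha i) (hc : forall i, 0 <= c i)
  (* mu_i is a Borel measure on C \ {0}: it is carried by C \ {0} *)
  (hsupp : forall i, mu i (~` (@coneStar R d : set (BorelRd R d))) = 0%E)
  (hbig : forall i, (mu i (@bigJumps R d : set (BorelRd R d)) < +oo)%E)
  (hsmall : forall i,
     (\int[mu i]_(xi in (@smallJumps R d : set (BorelRd R d)))
        ((\sum_(k < d | k != i) `|xi 0 k|) + `|xi 0 i| ^+ 2)%:E < +oo)%E)
  (hdrift : forall i (k : 'I_d), k != i ->
     (0 <= (beta i 0 k)%:E
        - \int[mu i]_(xi in (@smallJumps R d : set (BorelRd R d))) (xi 0 k)%:E)%E) :
  let f := fun i => fcomp (alpha i) (c i) (beta i) (mu i) i in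
  let U := effdom f in
  convex_set_Rd U /\ order_regular U /\ convex_map_on f U /\ quasi_monotone_on f U.
Proof.
move=> f U.
pose M i := (\int[mu i]_(xi in (@coneStar R d : set (BorelRd R d))) (psi xi)%:E)%E.
have Mfin i : M i \is a fin_num := integrable_fin_num (@mconeStar R d) (psi_int (hbig i)).
pose p i (x : 'rV[R]_d) := (alpha i / 2) * x 0 i ^+ 2 + dotv x (beta i) - c i.
have fE i x : f i x = ((p i x)%:E + (J (mu i) x + M i))%E.
  exact: f_decomp.
have JU x : U x -> forall i, J (mu i) x \is a fin_num.
  move=> Ux i; have := Ux i; rewrite fE lt_decomp ?Mfin ?J_ge0 // => h.
  by rewrite ge0_fin_numE ?J_ge0.
have UJ x : (forall i, (J (mu i) x < +oo)%E) -> U x.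
  by move=> h i; rewrite fE lt_decomp ?Mfin ?J_ge0 ?h.
have cU : convex_set_Rd U.
  move=> x y l Ux Uy hl; apply: UJ => i.
  have hJ := J_convex (mu i) x y hl.
  apply: le_lt_trans hJ _.
  by rewrite -(fineK (JU x Ux i)) -(fineK (JU y Uy i)) -!EFinM -EFinD ltry.
have oR : order_regular U.
  move=> x y Ux hyx; apply: UJ => i.
  have hJ := J_oreg (mu i) i hyx.
  apply: le_lt_trans hJ _.
  have hs : (\int[mu i]_(xi in (@smallJumps R d : set (BorelRd R d))) (Hs i xi)%:E < +oo)%E
    := hsmall i.
  have hs0 : (0 <= \int[mu i]_(xi in (@smallJumps R d : set (BorelRd R d))) (Hs i xi)%:E)%E.
    apply: integral_ge0 => xi _; rewrite lee_fin /Hs.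
    by apply: addr_ge0; [exact: sumr_ge0 | exact: sqr_ge0].
  have hsf : (\int[mu i]_(xi in (@smallJumps R d : set (BorelRd R d))) (Hs i xi)%:E)%E
    \is a fin_num by rewrite ge0_fin_numE.
  by rewrite -(fineK (JU x Ux i)) -(fineK hsf) -EFinM -EFinD ltry.
split => //; split => //; split.
  split => // x y l Ux Uy hl i.
  have Uz := cU x y l Ux Uy hl.
  have hJ := J_convex (mu i) x y hl.
  have hp : p i (l *: x + (1 - l) *: y) <= l * p i x + (1 - l) * p i y.
    rewrite /p dot_conv !mxE.
    have hq := conv_sq (x 0 i) (y 0 i) hl.
    have a0 : 0 <= alpha i / 2 by apply: divr_ge0 => //; exact: halpha.
    have := ler_wpM2l a0 hq.
    lra.
  rewrite !fE.
  move: hJ.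
  rewrite -(fineK (JU _ Uz i)) -(fineK (JU x Ux i)) -(fineK (JU y Uy i)) -(fineK (Mfin i)).
  rewrite -!EFinD !lee_fin.
  lra.
move=> x y Ux Uy hxy i hi.
pose I k := (\int[mu i]_(xi in (@smallJumps R d : set (BorelRd R d))) (xi 0 k)%:E)%E.
have hJ := J_quasi (mu i) hxy.
have hsum : (\sum_(k < d) ((y 0 k - x 0 k)%:E * I k) <=
    (\sum_(k < d) (y 0 k - x 0 k) * beta i 0 k)%:E)%E.
  rewrite -sumEFin; apply: lee_sum => k _.
  have hk0 : 0 <= y 0 k - x 0 k by rewrite subr_ge0.
  have I0 : (0 <= I k)%E.
    by apply: integral_ge0 => xi [[Cxi _] _]; rewrite lee_fin; exact: Cxi k.
  have [->|kni] := eqVneq k i.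
    by rewrite hi subrr mul0e mul0r.
  rewrite EFinM; apply: lee_pmul; [by rewrite lee_fin | exact: I0 | exact: lexx |].
  exact: le_drift (hdrift i k kni) I0.
have hJ2 := le_trans hJ (leeD2l (J (mu i) y) hsum).
have pd : p i y = p i x + \sum_(k < d) (y 0 k - x 0 k) * beta i 0 k.
  rewrite /p -hi.
  have : dotv y (beta i) - dotv x (beta i) = \sum_(k < d) (y 0 k - x 0 k) * beta i 0 k.
    by rewrite /dotv -sumrB; apply: eq_bigr => k _; ring.
  lra.
rewrite !fE.
move: hJ2.
rewrite -(fineK (JU x Ux i)) -(fineK (JU y Uy i)) -(fineK (Mfin i)).
rewrite -!EFinD !lee_fin.
lra.
Qed.
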